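(* Let $\sigma_1,\sigma_2>0$, $\beta\in(0,1)$, $r\in(0,1)$ be fixed, and let $n\to\infty$ and $p\to\infty$ with $\log(n)/p\to0$. Set $\epsilon=n^{-\beta}$ and $A=\sqrt{2r\log n}$. Consider the testing problem for $n$ i.i.d. observations $\mathbf X_1,\dots,\mathbf X_n\in\mathbb R^p$: \[ H_0:\ \mathbf X_i\sim N(0\cdot\mathbf 1_p,\sigma_1^2\mathbf I_p),\qquad H_1:\ \mathbf X_i\sim(1-\epsilon)N(0\cdot\mathbf 1_p,\sigma_1^2\mathbf I_p)+\epsilon N(A\mathbf 1_p,\sigma_2^2\mathbf I_p),\quad 1\le i\le n. \] Then for the likelihood ratio test (rejecting $H_0$ when the likelihood ratio of $H_1$ to $H_0$ exceeds $1$), the sum of the type I and type II error probabilities tends to $0$.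
   Context: $\mathbf 1_p$ is the all-ones vector in $\mathbb R^p$ and $\mathbf I_p$ the $p\times p$ identity; both hypotheses are simple (all parameters known). *)

(* Defs.v *)
From HB Require Import structures.
From mathcomp Require Import all_boot all_order all_algebra.
From mathcomp Require Import all_classical all_reals all_analysis.
Set Implicit Arguments. Unset Strict Implicit. Unset Printing Implicit Defensive.
Import Order.TTheory GRing.Theory Num.Def Num.Theory.
Import numFieldNormedType.Exports.
Local Open Scope classical_set_scope.
Local Open Scope ring_scope.

(* Iterated Lebesgue integral over R^k (coordinates 0..k-1 of a point
   v : nat -> R; coordinates >= k are fixed to 0).  For nonnegative
   measurable integrands this is the Lebesgue integral over R^k (Tonelli). *)
Fixpoint iint {R : realType} (k : nat) (F : (nat -> R) -> \bar R) : \bar R :=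
  match k with
  | 0 => F (fun _ => 0)
  | k'.+1 => (\int[@lebesgue_measure R]_(x in [set: R])
                iint k' (fun v => F (fun j => if j == k' then x else v j)))%E
  end.

Section Model.
Variables (R : realType) (s1 s2 eps A : R) (n p : nat).

(* Data matrix X (n observations in R^p) encoded as a point of R^(n*p):
   X_{ij} = x (i * p + j). *)
Definition obs (x : nat -> R) (i j : nat) : R := x (i * p + j)%N.

Definition dens0 (y : nat -> R) : R := \prod_(j < p) normal_pdf 0 s1 (y j).
Definition dens1 (y : nat -> R) : R :=
  (1 - eps) * \prod_(j < p) normal_pdf 0 s1 (y j)
  + eps * \prod_(j < p) normal_pdf A s2 (y j).

Definition lik0 (x : nat -> R) : R := \prod_(i < n) dens0 (obs x i).
Definition lik1 (x : nat -> R) : R := \prod_(i < n) dens1 (obs x i).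

Definition lrt_reject (x : nat -> R) : bool := 1 < lik1 x / lik0 x.

Definition type1_error : \bar R :=
  iint (n * p) (fun x => (lik0 x * (lrt_reject x)%:R)%:E).
Definition type2_error : \bar R :=
  iint (n * p) (fun x => (lik1 x * (~~ lrt_reject x)%:R)%:E).
End Model.

(* Main.v *)
Require Import Defs.
From HB Require Import structures.
From mathcomp Require Import all_boot all_order all_algebra.
From mathcomp Require Import all_classical all_reals all_analysis.
Import Order.TTheory GRing.Theory Num.Def Num.Theory.
Import numFieldNormedType.Exports.
Local Open Scope classical_set_scope.
Local Open Scope ring_scope.
From mathcomp Require Import ring lra measurable_realfun.
Import HBNNSimple.

Section S.
Context {R : realType}.
Local Notation mu := (@lebesgue_measure R).
Local Open Scope ereal_scope.

Lemma le_int_nm (f g : R -> \bar R) : (forall x, 0 <= f x) -> (forall x, f x <= g x) ->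
  \int[mu]_x f x <= \int[mu]_x g x.
Proof.
move=> f0 fg.
have g0 x : 0 <= g x by apply: le_trans (f0 x) (fg x).
rewrite !ge0_integralTE//; apply: ereal_sup_le => _ [h /= hf <-].
by exists h => //= x; apply: le_trans (hf x) (fg x).
Qed.

Lemma intZr_le (f : R -> \bar R) (k : R) : (0 < k)%R -> (forall x, 0 <= f x) ->
  \int[mu]_x (f x * k%:E) <= \int[mu]_x f x * k%:E.
Proof.
move=> k0 f0.
have fk0 x : 0 <= f x * k%:E by rewrite mule_ge0// lee_fin ltW.
rewrite !ge0_integralTE//; apply: ge_ereal_sup => _ [h /= hf <-].
have ki0 : (0 <= k^-1)%R by rewrite invr_ge0 ltW.
pose h' := scale_nnsfun h ki0.
have -> : sintegral mu h = sintegral mu (cst k \* h')%R.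
  apply: eq_sintegral => x /=; rewrite mulrA mulfV ?mul1r// gt_eqF//.
rewrite sintegralrM muleC lee_pmul2r ?lte_fin//.
apply: ereal_sup_ubound; exists h' => //= x.
rewrite mulrC EFinM lee_pdivrMr//; apply: hf.
Qed.

Lemma intZr_nm (f : R -> \bar R) (k : R) : (0 <= k)%R -> (forall x, 0 <= f x) ->
  \int[mu]_x (f x * k%:E) = \int[mu]_x f x * k%:E.
Proof.
move=> k0 f0; have [->|kp] := eqVneq k 0%R.
  rewrite mule0; under eq_integral do rewrite mule0; exact: integral0.
have kg : (0 < k)%R by rewrite lt_def kp.
apply/eqP; rewrite eq_le intZr_le//=.
have H := @intZr_le (fun x => f x * k%:E) k^-1 ltac:(by rewrite invr_gt0)
   ltac:(by move=> x; rewrite mule_ge0// lee_fin).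
have E : \int[mu]_x (f x * k%:E * (k^-1)%:E) = \int[mu]_x f x.
  by apply: eq_integral => x _; rewrite -muleA -EFinM mulfV// mule1.
rewrite E in H.
apply: le_trans (lee_wpmul2r _ H) _; first by rewrite lee_fin.
by rewrite -muleA -EFinM mulVf// mule1.
Qed.

Definition upd (k : nat) (x : R) (v : nat -> R) := fun j => if j == k then x else v j.
Definition trunc (k : nat) (v : nat -> R) := fun j => if (j < k)%N then v j else 0%R.
Definition glue (k : nat) (v u : nat -> R) := fun j => if (j < k)%N then v j else u (j - k)%N.

Lemma iintS k (F : (nat -> R) -> \bar R) :
  iint k.+1 F = \int[mu]_x iint k (fun v => F (upd k x v)).
Proof. by []. Qed.

Lemma iint_trunc k (F : (nat -> R) -> \bar R) : iint k F = iint k (fun v => F (trunc k v)).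
Proof.
elim: k F => [|k IH] F.
  by rewrite /=; congr F; apply/funext => j; rewrite /trunc.
rewrite !iintS; apply: eq_integral => x _.
rewrite IH [in RHS]IH; congr iint; apply/funext => v; congr F.
apply/funext => j; rewrite /upd /trunc ltnS.
by case: ltngtP => //= ->; rewrite eqxx.
Qed.

Lemma iint_glue k b (F : (nat -> R) -> \bar R) : iint (k + b) F =
  iint b (fun u => iint k (fun v => F (glue k v u))).
Proof.
elim: b F => [|b IH] F.
  rewrite addn0 /= iint_trunc [in RHS]iint_trunc; congr iint; apply/funext => v.
  by congr F; apply/funext => j; rewrite /glue /trunc; case: ifP.
rewrite addnS !iintS; apply: eq_integral => x _.
rewrite IH; congr iint; apply/funext => u; congr iint; apply/funext => v.
congr F; apply/funext => j; rewrite /upd /glue.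
case: (ltnP j k) => jk.
  by have -> : (j == k + b)%N = false by apply/negbTE; rewrite neq_ltn ltn_addr.
by rewrite -{1}(subnKC jk) eqn_add2l.
Qed.

Lemma iint_ge0 k (F : (nat -> R) -> \bar R) : (forall v, 0 <= F v) -> 0 <= iint k F.
Proof.
elim: k F => [|k IH] F F0 //=.
by apply: integral_ge0 => x _; apply: IH.
Qed.

Lemma iint_le k (F G : (nat -> R) -> \bar R) : (forall v, 0 <= F v) -> (forall v, F v <= G v) ->
  iint k F <= iint k G.
Proof.
elim: k F G => [|k IH] F G F0 FG //=.
apply: le_int_nm => x; first by apply: iint_ge0.
by apply: IH.
Qed.

Lemma iint_scale k (F : (nat -> R) -> \bar R) (c : R) : (0 <= c)%R -> (forall v, 0 <= F v) ->
  iint k (fun v => F v * c%:E) = iint k F * c%:E.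
Proof.
move=> c0; elim: k F => [|k IH] F F0 //=.
under eq_integral do rewrite IH//.
by rewrite intZr_nm// => x; apply: iint_ge0.
Qed.

Definition dep_lt (k : nat) (G : (nat -> R) -> R) :=
  forall x y, (forall j, (j < k)%N -> x j = y j) -> G x = G y.

Lemma iint_split k b (G h : (nat -> R) -> R) (c : R) :
  (forall v, 0 <= G v)%R -> (forall v, 0 <= h v)%R -> dep_lt k G ->
  iint k (fun v => (G v)%:E) = c%:E ->
  iint (k + b) (fun x => (G x * h (fun j => x (k + j)%N))%:E) =
  c%:E * iint b (fun u => (h u)%:E).
Proof.
move=> G0 h0 dG Gc; rewrite iint_glue.
have c0 : (0 <= c)%R by rewrite -lee_fin -Gc iint_ge0.
transitivity (iint b (fun u => (h u)%:E * c%:E)); last first.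
  by rewrite iint_scale// 1?muleC// => v; rewrite lee_fin.
congr iint; apply/funext => u.
transitivity (iint k (fun v => (G v)%:E * (h u)%:E)); last first.
  by rewrite iint_scale ?Gc 1?muleC// => v; rewrite lee_fin.
congr iint; apply/funext => v; rewrite EFinM; congr (_%:E * _%:E).
  by apply: dG => j jk; rewrite /glue jk.
congr h; apply/funext => j; rewrite /glue ltnNge leq_addr /=.
by rewrite addKn.
Qed.


Lemma iint_prod p (h : (nat -> R) -> R) (c : R) n :
  (forall v, 0 <= h v)%R -> dep_lt p h -> iint p (fun v => (h v)%:E) = c%:E ->
  iint (n * p) (fun x => (\prod_(i < n) h (obs p x i))%R%:E) = (c ^+ n)%:E.
Proof.
move=> h0 dh hc; elim: n => [|n IH].
  by rewrite mul0n /= big_ord0 expr0.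
rewrite mulSnr.
have -> : (fun x => (\prod_(i < n.+1) h (obs p x i))%R%:E) =
  (fun x => ((\prod_(i < n) h (obs p x i)) * h (fun j => x (n * p + j)%N))%R%:E).
  by apply/funext => x; rewrite big_ord_recr.
rewrite (@iint_split (n * p) p (fun x => \prod_(i < n) h (obs p x i))%R h (c ^+ n)).
- by rewrite hc -EFinM exprSr.
- by move=> v; apply: prodr_ge0 => i _.
- by [].
- move=> x y xy; apply: eq_bigr => i _; apply: dh => j jp; rewrite /obs; apply: xy.
  apply: leq_trans (_ : i.+1 * p <= n * p)%N; first by rewrite mulSnr ltn_add2l.
  by rewrite leq_mul2r ltn_ord orbT.
- by [].
Qed.

Lemma iint_mix (f g : R -> R) p (a b : R) :
  measurable_fun setT f -> measurable_fun setT g ->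
  (forall x, 0 <= f x)%R -> (forall x, 0 <= g x)%R ->
  \int[mu]_x (f x)%:E = 1 -> \int[mu]_x (g x)%:E = 1 ->
  (0 <= a)%R -> (0 <= b)%R ->
  iint p (fun y => (a * \prod_(j < p) f (y j) + b * \prod_(j < p) g (y j))%R%:E) = (a + b)%:E.
Proof.
move=> mf mg f0 g0 f1 g1; elim: p a b => [|p IH] a b a0 b0.
  by rewrite /= !big_ord0 !mulr1.
rewrite iintS.
transitivity (\int[mu]_x ((a * f x)%:E + (b * g x)%:E)).
  apply: eq_integral => x _.
  rewrite -EFinD -IH ?mulr_ge0//; congr iint; apply/funext => v.
  rewrite !big_ord_recr /= /upd eqxx.
  have E (F : R -> R) : (\prod_(i < p) F (if widen_ord (leqnSn p) i == p :> nat then x else v (widen_ord (leqnSn p) i)) = \prod_(i < p) F (v i))%R.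
    by apply: eq_bigr => i _; rewrite /= ltn_eqF.
  rewrite !E; congr (_%:E); lra.
rewrite ge0_integralD//; last 4 first.
- by move=> x _; rewrite lee_fin mulr_ge0.
- by apply/measurable_EFinP; apply: measurable_funM.
- by move=> x _; rewrite lee_fin mulr_ge0.
- by apply/measurable_EFinP; apply: measurable_funM.
under eq_integral do rewrite EFinM.
under [X in _ + X = _]eq_integral do rewrite EFinM.
have mf' : measurable_fun setT (fun x => (f x)%:E) by exact/measurable_EFinP.
have mg' : measurable_fun setT (fun x => (g x)%:E) by exact/measurable_EFinP.
have H1 : \int[mu]_x (a%:E * (f x)%:E) = a%:E * \int[mu]_x (f x)%:E.
  rewrite ge0_integralZl_EFin//.
  all: try by move=> x _; rewrite lee_fin.

have H2 : \int[mu]_x (b%:E * (g x)%:E) = b%:E * \int[mu]_x (g x)%:E.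
  rewrite ge0_integralZl_EFin//.
  all: try by move=> x _; rewrite lee_fin.
by rewrite H1 H2 f1 g1 !mule1 EFinD.
Qed.
End S.
Section G.
Context {R : realType}.

Definition gS (s1 s2 : R) := s1 ^+ 2 + s2 ^+ 2.
Definition gq (s1 s2 : R) := 2 * s1 ^+ 2 * s2 ^+ 2 / gS s1 s2.
Definition gm (s1 s2 A : R) := A * s1 ^+ 2 / gS s1 s2.
Definition gc (s1 s2 A : R) := expR (- A ^+ 2 / (4 * gS s1 s2)).

Lemma peak_sqr (t : R) : normal_peak t ^+ 2 = (t ^+ 2 * pi *+ 2)^-1.
Proof.
rewrite /normal_peak exprVn sqr_sqrtr// mulrn_wge0// mulr_ge0 ?sqr_ge0//.
exact: ltW (pi_gt0 _).
Qed.

Lemma gauss_pt (s1 s2 A x : R) : 0 < s1 -> 0 < s2 ->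
  Num.sqrt (normal_pdf 0 s1 x * normal_pdf A s2 x) <=
  gc s1 s2 A * normal_pdf (gm s1 s2 A) (Num.sqrt (gq s1 s2)) x.
Proof.
move=> hs1 hs2.
have S0 : 0 < gS s1 s2 by rewrite /gS addr_gt0// exprn_gt0.
have q0 : 0 < gq s1 s2 by rewrite /gq divr_gt0// !mulr_gt0// exprn_gt0.
set q := gq s1 s2; set s := Num.sqrt q.
have s0 : 0 < s by rewrite sqrtr_gt0.
have ss : s ^+ 2 = q by rewrite sqr_sqrtr// ltW.
rewrite !normal_pdfE ?gt_eqF// /normal_fun.
have rhs0 : 0 <= gc s1 s2 A * (normal_peak s * expR (- (x - gm s1 s2 A) ^+ 2 / (s ^+ 2 *+ 2))).
  by rewrite mulr_ge0 ?expR_ge0// mulr_ge0 ?normal_peak_ge0 ?expR_ge0.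
rewrite -(ger0_norm rhs0) -sqrtr_sqr ler_sqrt ?sqr_ge0//.
rewrite ss /gc.
set E1 := - (x - 0) ^+ 2 / (s1 ^+ 2 *+ 2).
set E2 := - (x - A) ^+ 2 / (s2 ^+ 2 *+ 2).
set K := - A ^+ 2 / (4 * gS s1 s2).
set G := - (x - gm s1 s2 A) ^+ 2 / (q *+ 2).
have EE : E1 + E2 = (K + G) + (K + G).
  rewrite /E1 /E2 /K /G /q /gq /gm; move: S0; rewrite /gS => S0.
  field; rewrite ?gt_eqF//; apply/andP; split; rewrite ?mulf_neq0 ?gt_eqF ?exprn_gt0//.
have -> : (expR K * (normal_peak s * expR G)) ^+ 2 =
          normal_peak s ^+ 2 * expR (E1 + E2).
  by rewrite EE !expRD; ring.
have -> : normal_peak s1 * expR E1 * (normal_peak s2 * expR E2) =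
          (normal_peak s1 * normal_peak s2) * expR (E1 + E2).
  by rewrite expRD; ring.
rewrite ler_pM2r ?expR_gt0//.
have p1 := normal_peak_gt0 (lt0r_neq0 hs1).
have p2 := normal_peak_gt0 (lt0r_neq0 hs2).
have ps := normal_peak_gt0 (lt0r_neq0 s0).
rewrite peak_sqr /normal_peak -invfM -sqrtrM; last first.
  by rewrite mulrn_wge0// mulr_ge0 ?sqr_ge0// ltW// pi_gt0.
rewrite lef_pV2 ?posrE.
rewrite ss.
have qp0 : 0 <= q * pi *+ 2 by rewrite mulrn_wge0// mulr_ge0 ?ltW// pi_gt0.
rewrite -(ger0_norm qp0) -sqrtr_sqr ler_sqrt; last first.
  by rewrite mulr_ge0// mulrn_wge0// mulr_ge0 ?sqr_ge0// ltW// pi_gt0.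
have Hq : q ^+ 2 <= s1 ^+ 2 * s2 ^+ 2.
  rewrite /q /gq expr_div_n ler_pdivrMr ?exprn_gt0//.
  move: S0; rewrite /gS => S0.
  have a0 : 0 < s1 ^+ 2 by rewrite exprn_gt0.
  have b0 : 0 < s2 ^+ 2 by rewrite exprn_gt0.
  have := mulr_ge0 (mulr_ge0 (ltW a0) (ltW b0)) (sqr_ge0 (s1 ^+ 2 - s2 ^+ 2)).
  move: (s1 ^+ 2) (s2 ^+ 2) a0 b0 => a b a0 b0 H.
  nra.
have pi0 := pi_gt0 R.
have pp : 0 < (pi *+ 2 : R) ^+ 2 by rewrite exprn_gt0// mulrn_wgt0.
rewrite -!mulrnAr.
have -> : (q * (pi *+ 2)) ^+ 2 = q ^+ 2 * (pi *+ 2) ^+ 2 by ring.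
have -> : s1 ^+ 2 * (pi *+ 2) * (s2 ^+ 2 * (pi *+ 2)) = s1 ^+ 2 * s2 ^+ 2 * (pi *+ 2) ^+ 2 by ring.
rewrite ler_pM2r //.
  by rewrite sqrtr_gt0 mulr_gt0// mulrn_wgt0// mulr_gt0 ?exprn_gt0// pi_gt0.
by rewrite mulrn_wgt0// mulr_gt0 ?exprn_gt0// pi_gt0.
Qed.
End G.

Section B.
Context {R : realType}.

Lemma sqrt_prod n (F : 'I_n -> R) : (forall i, 0 <= F i) ->
  Num.sqrt (\prod_(i < n) F i) = \prod_(i < n) Num.sqrt (F i).
Proof.
move=> F0.
suff : 0 <= \prod_(i < n) F i /\ Num.sqrt (\prod_(i < n) F i) = \prod_(i < n) Num.sqrt (F i) by case.
elim/big_rec2: _ => [|i y1 y2 _ [h1 h2]]; first by rewrite sqrtr1.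
by split; [rewrite mulr_ge0|rewrite sqrtrM// h2].
Qed.

Lemma sqrtD_le (u v : R) : 0 <= u -> 0 <= v -> Num.sqrt (u + v) <= Num.sqrt u + Num.sqrt v.
Proof.
move=> u0 v0.
have h0 : 0 <= Num.sqrt u + Num.sqrt v by rewrite addr_ge0 ?sqrtr_ge0.
rewrite -(ger0_norm h0) -sqrtr_sqr ler_sqrt ?sqr_ge0//.
rewrite sqrrD !sqr_sqrtr// -addrA lerD2l lerDr.
by rewrite mulrn_wge0// mulr_ge0 ?sqrtr_ge0.
Qed.

Lemma pdf_gt0 m (s x : R) : 0 < s -> 0 < normal_pdf m s x.
Proof.
move=> s0; rewrite normal_pdfE ?lt0r_neq0// mulr_gt0 ?expR_gt0//.
exact: normal_peak_gt0 (lt0r_neq0 s0).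
Qed.

Definition hobs (s1 s2 eps A : R) p (y : nat -> R) :=
  Num.sqrt (1 - eps) * \prod_(j < p) normal_pdf 0 s1 (y j) +
  (Num.sqrt eps * gc s1 s2 A ^+ p) * \prod_(j < p) normal_pdf (gm s1 s2 A) (Num.sqrt (gq s1 s2)) (y j).

Lemma dens_bound (s1 s2 eps A : R) p y : 0 < s1 -> 0 < s2 -> 0 <= eps <= 1 ->
  Num.sqrt (dens0 s1 p y * dens1 s1 s2 eps A p y) <= hobs s1 s2 eps A p y.
Proof.
move=> hs1 hs2 /andP[e0 e1].
rewrite /dens0 /dens1 /hobs.
set P0 := \prod_(j < p) normal_pdf 0 s1 (y j).
set P1 := \prod_(j < p) normal_pdf A s2 (y j).
have P00 : 0 <= P0 by apply: prodr_ge0 => j _; exact: normal_pdf_ge0.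
have P10 : 0 <= P1 by apply: prodr_ge0 => j _; exact: normal_pdf_ge0.
have -> : P0 * ((1 - eps) * P0 + eps * P1) = (1 - eps) * P0 ^+ 2 + eps * (P0 * P1) by ring.
apply: le_trans; first apply: sqrtD_le.
- by rewrite mulr_ge0 ?sqr_ge0 ?subr_ge0.
- by rewrite mulr_ge0// mulr_ge0.
rewrite sqrtrM ?subr_ge0// sqrtr_sqr ger0_norm// lerD2l sqrtrM// -mulrA ler_wpM2l ?sqrtr_ge0//.
rewrite /P0 /P1 -big_split /= sqrt_prod; last first.
  by move=> j; rewrite mulr_ge0 ?normal_pdf_ge0.
rewrite -[in X in _ <= X * _](card_ord p) -prodr_const -big_split /=.
apply: ler_prod => j _; rewrite sqrtr_ge0 /=.
exact: gauss_pt.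
Qed.

Lemma hobs_ge0 (s1 s2 eps A : R) p y : 0 <= eps ->
  0 <= hobs s1 s2 eps A p y.
Proof.
move=> e0; rewrite /hobs.
have g0 : 0 <= gc s1 s2 A ^+ p by rewrite exprn_ge0// expR_ge0.
apply: addr_ge0; apply: mulr_ge0; rewrite ?mulr_ge0 ?sqrtr_ge0//;
  by apply: prodr_ge0 => j _; exact: normal_pdf_ge0.
Qed.

Lemma lik_bound (s1 s2 eps A : R) n p x : 0 < s1 -> 0 < s2 -> 0 <= eps <= 1 ->
  Num.sqrt (lik0 s1 n p x * lik1 s1 s2 eps A n p x) <=
  \prod_(i < n) hobs s1 s2 eps A p (obs p x i).
Proof.
move=> hs1 hs2 he; have /andP[e0 e1] := he.
rewrite /lik0 /lik1 -big_split /= sqrt_prod; last first.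
  move=> i; rewrite mulr_ge0//; first by apply: prodr_ge0 => j _; exact: normal_pdf_ge0.
  rewrite /dens1 addr_ge0// mulr_ge0 ?subr_ge0//;
  by apply: prodr_ge0 => j _; exact: normal_pdf_ge0.
apply: ler_prod => i _; rewrite sqrtr_ge0 /=; exact: dens_bound.
Qed.


Lemma lik0_gt0 (s1 : R) n p x : 0 < s1 -> 0 < lik0 s1 n p x.
Proof.
move=> hs1; apply: prodr_gt0 => i _; apply: prodr_gt0 => j _; exact: pdf_gt0.
Qed.

Lemma lik1_ge0 (s1 s2 eps A : R) n p x : 0 <= eps <= 1 -> 0 <= lik1 s1 s2 eps A n p x.
Proof.
move=> /andP[e0 e1]; apply: prodr_ge0 => i _; rewrite /dens1 addr_ge0// mulr_ge0 ?subr_ge0//;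
  by apply: prodr_ge0 => j _; exact: normal_pdf_ge0.
Qed.

Lemma err_bound (s1 s2 eps A : R) n p : 0 < s1 -> 0 < s2 -> 0 <= eps <= 1 ->
  (type1_error s1 s2 eps A n p <= ((Num.sqrt (1 - eps) + Num.sqrt eps * gc s1 s2 A ^+ p) ^+ n)%:E /\
   type2_error s1 s2 eps A n p <= ((Num.sqrt (1 - eps) + Num.sqrt eps * gc s1 s2 A ^+ p) ^+ n)%:E)%E.
Proof.
move=> hs1 hs2 he; have /andP[e0 e1] := he.
set c := Num.sqrt (1 - eps) + _.
have Hi : iint (n * p) (fun x => (\prod_(i < n) hobs s1 s2 eps A p (obs p x i))%:E) = (c ^+ n)%:E.
  apply: iint_prod.
  - by move=> v; exact: hobs_ge0.
  - move=> x y xy; rewrite /hobs; congr (_ * _ + _ * _); apply: eq_bigr => j _; by rewrite xy.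
  - rewrite /hobs; apply: iint_mix.
    + exact: measurable_normal_pdf.
    + exact: measurable_normal_pdf.
    + by move=> x; exact: normal_pdf_ge0.
    + by move=> x; exact: normal_pdf_ge0.
    + exact: integral_normal_pdf.
    + exact: integral_normal_pdf.
    + exact: sqrtr_ge0.
    + by rewrite mulr_ge0 ?sqrtr_ge0// exprn_ge0// expR_ge0.
have key x := lik_bound s1 s2 eps A n p x hs1 hs2 he.
have L0 x := lik0_gt0 s1 n p x hs1.
have L1 x := lik1_ge0 s1 s2 eps A n p x he.
split; rewrite -Hi; apply: iint_le => x.
- by rewrite lee_fin; apply: mulr_ge0; [exact: ltW|exact: ler0n].
- rewrite lee_fin; apply: le_trans (key x).
  have [H|H] := boolP (lrt_reject s1 s2 eps A n p x); last by rewrite mulr0 sqrtr_ge0.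
  move: H; rewrite /lrt_reject => H.
  rewrite mulr1 -[X in X <= _](ger0_norm (ltW (L0 x))) -sqrtr_sqr ler_sqrt; last first.
    by apply: mulr_ge0; [exact: ltW|exact: L1].
  by rewrite expr2 ler_pM2l// ltW// -(mul1r (lik0 _ _ _ _)) -ltr_pdivlMr.
- by rewrite lee_fin; apply: mulr_ge0; [exact: L1|exact: ler0n].
- rewrite lee_fin; apply: le_trans (key x).
  have [H|H] := boolP (lrt_reject s1 s2 eps A n p x); first by rewrite mulr0 sqrtr_ge0.
  move: H; rewrite /lrt_reject => H.
  rewrite mulr1 -[X in X <= _](ger0_norm (L1 x)) -sqrtr_sqr ler_sqrt; last first.
    by apply: mulr_ge0; [exact: ltW|exact: L1].
  rewrite expr2 ler_wpM2r//.
  by rewrite -(mul1r (lik0 _ _ _ _)) -ler_pdivrMr// leNgt H.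
Qed.

End B.

Section C.
Context {R : realType}.
Lemma sqrt_expR (u : R) : Num.sqrt (expR u) = expR (u / 2).
Proof.
have -> : expR u = expR (u / 2) ^+ 2 by rewrite -expRM_natr -mulrA mulVf// mulr1.
by rewrite sqrtr_sqr ger0_norm// expR_ge0.
Qed.

Lemma eps_range (beta : R) (n : nat) : 0 < beta -> 0 <= (n%:R : R) `^ (- beta) <= 1.
Proof.
move=> b0; rewrite powR_ge0 /=.
case: n => [|n]; first by rewrite powR0 ?oppr_eq0 ?gt_eqF.
rewrite /powR pnatr_eq0 /= -[leRHS]expR0 ler_expR mulNr oppr_le0.
by apply: mulr_ge0; [exact: ltW|apply: ln_ge0; rewrite ler1n].
Qed.

Lemma core (s1 s2 beta r : R) (n p : nat) : 0 < s1 -> 0 < s2 -> 0 < beta < 1 -> 0 < r ->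
  (4 <= n)%N -> 2 * gS s1 s2 * (1 + beta / 2) / r <= p%:R ->
  let eps := (n%:R : R) `^ (- beta) in
  let A := Num.sqrt (2 * r * ln (n%:R : R)) in
  (Num.sqrt (1 - eps) + Num.sqrt eps * gc s1 s2 A ^+ p) ^+ n <=
  expR (- expR ((1 - beta) * ln (n%:R : R)) / 4).
Proof.
move=> hs1 hs2 /andP[b0 b1] r0 n4 hp; cbv zeta.
set eps := (n%:R : R) `^ (- beta).
set A := Num.sqrt (2 * r * ln (n%:R : R)).
have S0 : 0 < gS s1 s2 by rewrite /gS addr_gt0// exprn_gt0.
have n0 : (0 < n%:R :> R) by rewrite ltr0n; apply: leq_trans n4.
set L := ln (n%:R : R).
have L0 : 0 < L by rewrite ln_gt0// ltr1n; apply: leq_trans n4.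
have nL : expR L = n%:R by rewrite lnK// posrE.
have nn0 : (n != 0)%N by rewrite -lt0n; apply: leq_trans n4.
have epsE : eps = expR (- beta * L) by rewrite /eps /powR pnatr_eq0 (negbTE nn0).
have e0 : 0 <= eps by rewrite epsE expR_ge0.
have e1 : eps <= 1 by rewrite epsE -expR0 ler_expR mulNr oppr_le0 mulr_ge0 ?ltW.
have A2 : A ^+ 2 = 2 * r * L by rewrite sqr_sqrtr// mulr_ge0 ?mulr_ge0 ?ltW.
have hb : Num.sqrt eps * gc s1 s2 A ^+ p <= eps / 4.
  rewrite epsE sqrt_expR /gc -expRM_natr -expRD A2.
  apply: (@le_trans _ _ (expR (- beta * L - L))).
    rewrite ler_expR.
    move: hp; rewrite ler_pdivrMr// => hp.
    have := ler_wpM2l (ltW L0) hp.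
    set P := p%:R; set S := gS s1 s2 => H.
    have -> : - (2 * r * L) / (4 * S) * P = - (r * L * P) / (2 * S).
      field; rewrite gt_eqF//.
    have -> : - beta * L / 2 + - (r * L * P) / (2 * S) =
              - (beta * L / 2 + (P * r * L) / (2 * S)).
      field; rewrite gt_eqF//.
    have -> : - beta * L - L = - (beta * L / 2 + (2 * S * (1 + beta / 2) * L) / (2 * S)).
      field; rewrite gt_eqF//.
    rewrite lerN2 lerD2l ler_pM2r ?invr_gt0 ?mulr_gt0//.
    lra.
  rewrite expRD expRN nL ler_pM2l ?expR_gt0// lef_pV2 ?posrE// ?ler_nat//.
have ha : Num.sqrt (1 - eps) <= 1 - eps / 2.
  have h0 : 0 <= 1 - eps / 2 by lra.
  rewrite -(ger0_norm h0) -sqrtr_sqr ler_sqrt ?sqr_ge0//.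
  have := sqr_ge0 eps; rewrite expr2 => H; rewrite expr2; lra.
have c0 : 0 <= Num.sqrt (1 - eps) + Num.sqrt eps * gc s1 s2 A ^+ p.
  by rewrite addr_ge0 ?sqrtr_ge0// mulr_ge0 ?sqrtr_ge0// exprn_ge0// expR_ge0.
apply: (@le_trans _ _ ((1 - eps / 4) ^+ n)).
  by apply: lerXn2r; rewrite ?nnegrE//; lra.
apply: (@le_trans _ _ (expR (- (eps / 4)) ^+ n)).
  apply: lerXn2r; rewrite ?nnegrE ?expR_ge0//; first lra.
  by have := expR_ge1Dx (- (eps / 4)); lra.
rewrite -expRM_natr ler_expR.
have -> : expR ((1 - beta) * L) = eps * n%:R.
  by rewrite epsE -nL -expRD; congr expR; ring.
lra.
Qed.
End C.

Theorem theorem2p8 (R : realType) (s1 s2 beta r : R)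
  (hs1 : 0 < s1) (hs2 : 0 < s2)
  (hbeta : 0 < beta < 1) (hr : 0 < r < 1)
  (nn pp : nat -> nat)
  (hn : (fun k => (nn k)%:R : R) @ \oo --> +oo)
  (hp : (fun k => (pp k)%:R : R) @ \oo --> +oo)
  (hlog : (fun k => ln ((nn k)%:R : R) / (pp k)%:R) @ \oo --> (0 : R)) :
  (fun k =>
     let n := nn k in let p := pp k in
     let eps := (n%:R : R) `^ (- beta) in
     let A := Num.sqrt (2 * r * ln (n%:R : R)) in
     (type1_error s1 s2 eps A n p + type2_error s1 s2 eps A n p)%E)
  @ \oo --> 0%E.
Proof.
have /andP[b0 b1] := hbeta; have /andP[r0 r1] := hr.
pose u k := 2 * expR (- expR ((1 - beta) * ln ((nn k)%:R : R)) / 4).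
apply: (@squeeze_cvge _ _ _ _ (fun _ => 0%E) _ (fun k => (u k)%:E)); last 2 first.
- exact: cvg_cst.
- apply/fine_cvgP; split; first by near=> k.
  rewrite /=.
  have T : (fun k => expR ((1 - beta) * ln ((nn k)%:R : R)) / 4) @ \oo --> +oo.
    apply/cvgryPge => M.
    near=> k.
    have hk : expR (4 * M / (1 - beta)) <= (nn k)%:R.
      by near: k; exact: ((cvgryPge _).1 hn).
    have nk0 : 0 < ((nn k)%:R : R) by apply: lt_le_trans hk; exact: expR_gt0.
    have hL : 4 * M / (1 - beta) <= ln ((nn k)%:R : R).
      by rewrite -ler_ln ?posrE ?expR_gt0// expRK in hk.
    have hL' : 4 * M <= (1 - beta) * ln ((nn k)%:R : R).
      by rewrite -ler_pdivrMl ?subr_gt0// mulrC.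
    have := expR_ge1Dx ((1 - beta) * ln ((nn k)%:R : R)).
    lra.
  have -> : (fine \o (fun k : nat => (u k)%:E)) =
     ((fun _ => 2) \* ((fun x => expR (- x)) \o (fun k => expR ((1 - beta) * ln ((nn k)%:R : R)) / 4))).
    by apply/funext => k; rewrite /u /= mulNr.
  rewrite -[0](mulr0 2).
  exact: (cvgM (cvg_cst (2 : R)) (cvg_comp _ _ T (@cvgr_expR R))).
near=> k.
have Hn : (4 <= nn k)%N.
  rewrite -(ler_nat R); near: k; exact: ((cvgryPge _).1 hn).
have Hp : 2 * gS s1 s2 * (1 + beta / 2) / r <= (pp k)%:R.
  by near: k; exact: ((cvgryPge _).1 hp).
cbv beta zeta.
set n := nn k; set p := pp k.
set eps := (n%:R : R) `^ (- beta).
set A := Num.sqrt (2 * r * ln (n%:R : R)).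
have he := eps_range beta n b0.
have [H1 H2] := err_bound s1 s2 eps A n p hs1 hs2 he.
have C := core s1 s2 beta r n p hs1 hs2 hbeta r0 Hn Hp.
apply/andP; split.
  apply: adde_ge0; apply: iint_ge0 => x; rewrite lee_fin; apply: mulr_ge0; rewrite ?ler0n//.
  - exact: ltW (lik0_gt0 _ _ _ _ hs1).
  - exact: lik1_ge0.
apply: le_trans (leeD H1 H2) _.
rewrite -EFinD lee_fin /u -/n mulr2n mulrDl mul1r.
by apply: lerD.
Unshelve. all: end_near.
Qed.
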